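(* Let $w\in S_n$. If $|C(w)|=1$ then $|B(w)|=|R(w)|$, and if $|B(w)|=1$ then $|C(w)|=|R(w)|$.
   Context: $S_n$ is generated by the adjacent transpositions $s_1,\dots,s_{n-1}$. A reduced word for $w$ is a word $i_1\cdots i_k$ with $w=s_{i_1}\cdots s_{i_k}$ and $k$ minimal; $R(w)$ is the set of reduced words. A braid move replaces a factor (consecutive letters) $i(i+1)i$ by $(i+1)i(i+1)$ or vice versa; a commutation move replaces a factor $ij$ with $|i-j|>1$ by $ji$. $B(w)$ (resp. $C(w)$) is the set of equivalence classes of $R(w)$ under sequences of braid moves (resp. commutation moves). *)

(* Defs.v *)
From Stdlib Require Import Relation_Operators.
From mathcomp Require Import all_boot all_order all_fingroup.
From mathcomp Require Import boolp classical_sets cardinality.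
Set Implicit Arguments. Unset Strict Implicit. Unset Printing Implicit Defensive.
Local Open Scope classical_set_scope.

(* Adjacent transposition s_i in S_n = 'S_n (permutations of 'I_n = {0,..,n-1}),
   with the paper's 1-based letters: s_i swaps positions i-1 and i (0-based),
   i.e. i and i+1 in 1-based numbering. Only letters 1 <= i <= n-1 are used. *)
Definition sadj (n i : nat) : 'S_n :=
  match n return 'S_n with
  | 0 => 1%g
  | m.+1 => tperm (inord i.-1 : 'I_m.+1) (inord i)
  end.

Definition valid_word (n : nat) (s : seq nat) : bool :=
  all (fun i => (0 < i) && (i < n)) s.

Definition word_prod (n : nat) (s : seq nat) : 'S_n :=
  (\prod_(i <- s) sadj n i)%g.

Definition reduced (n : nat) (w : 'S_n) (s : seq nat) : Prop :=
  [/\ valid_word n s, word_prod n s = w &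
      forall t, valid_word n t -> word_prod n t = w -> size s <= size t].

Definition Rw (n : nat) (w : 'S_n) : set (seq nat) := [set s | reduced w s].

Definition braid_move (s t : seq nat) : Prop :=
  exists u v i,
    (s = u ++ [:: i; i.+1; i] ++ v /\ t = u ++ [:: i.+1; i; i.+1] ++ v) \/
    (s = u ++ [:: i.+1; i; i.+1] ++ v /\ t = u ++ [:: i; i.+1; i] ++ v).

Definition comm_move (s t : seq nat) : Prop :=
  exists u v i j, ((i.+1 < j) || (j.+1 < i)) /\
    s = u ++ [:: i; j] ++ v /\ t = u ++ [:: j; i] ++ v.

Definition braid_equiv := clos_refl_trans (seq nat) braid_move.
Definition comm_equiv := clos_refl_trans (seq nat) comm_move.

Definition classes_of (n : nat) (w : 'S_n) (eqv : seq nat -> seq nat -> Prop)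
  : set (set (seq nat)) :=
  [set [set t | Rw w t /\ eqv s t] | s in Rw w].

Definition Bw (n : nat) (w : 'S_n) := classes_of w braid_equiv.
Definition Cw (n : nat) (w : 'S_n) := classes_of w comm_equiv.

(* Main.v *)
From Stdlib Require Import Relation_Operators.
Require Import Defs.
From mathcomp Require Import all_boot all_order all_fingroup.
From mathcomp Require Import boolp classical_sets cardinality.
From mathcomp Require Import zify.
Local Open Scope classical_set_scope.
Local Open Scope card_scope.

Module Aux.
Set Implicit Arguments. Unset Strict Implicit. Unset Printing Implicit Defensive.

Lemma tperm_braid (T : finType) (a b c : T) : a != b -> b != c -> a != c ->
  (tperm a b * tperm b c * tperm a b = tperm b c * tperm a b * tperm b c)%g.
Proof.
move=> ab bc ac.
have ca : c != a by rewrite eq_sym.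
have ba : b != a by rewrite eq_sym.
have E1 : (tperm a b * tperm b c * tperm a b = (tperm b c) ^ (tperm a b))%g.
  by rewrite conjgE tpermV mulgA.
have E2 : (tperm b c * tperm a b * tperm b c = (tperm a b) ^ (tperm b c))%g.
  by rewrite conjgE tpermV mulgA.
rewrite E1 E2 !tpermJ tpermR tpermL (@tpermD _ a b c) // (@tpermD _ b c a) //.
Qed.

Lemma tperm_comm (T : finType) (a b c d : T) : a != c -> a != d -> b != c -> b != d ->
  (tperm a b * tperm c d = tperm c d * tperm a b)%g.
Proof.
move=> ac ad bc bd.
have H : ((tperm c d) ^ (tperm a b) = tperm c d)%g.
  by rewrite tpermJ !tpermD // eq_sym.
move: H; rewrite conjgE tpermV => H.
by rewrite -{1}H mulgA tperm2 mul1g.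
Qed.

Lemma sadj_braid n i : 0 < i -> i.+1 < n ->
  (sadj n i * sadj n i.+1 * sadj n i = sadj n i.+1 * sadj n i * sadj n i.+1)%g.
Proof.
case: n => [//|m] i0 im /=.
apply: tperm_braid; rewrite -val_eqE /= !inordK //; lia.
Qed.

Lemma sadj_comm n i j : 0 < i -> i.+1 < j -> j < n ->
  (sadj n i * sadj n j = sadj n j * sadj n i)%g.
Proof.
case: n => [//|m] i0 ij jm /=.
apply: tperm_comm; rewrite -val_eqE /= !inordK //; try lia.
Qed.

Lemma word_prod_cat3 n u x v :
  word_prod n (u ++ x ++ v) = (word_prod n u * word_prod n x * word_prod n v)%g.
Proof. by rewrite /word_prod !big_cat /= mulgA. Qed.

Lemma valid_cat3 n u x v :
  valid_word n (u ++ x ++ v) = [&& valid_word n u, valid_word n x & valid_word n v].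
Proof. by rewrite /valid_word !all_cat. Qed.

Lemma braid_move_reduced n (w : 'S_n) s t : reduced w s -> braid_move s t -> reduced w t.
Proof.
case=> vs ps ms [u [v [i H]]].
have key : forall x y, s = u ++ x ++ v -> t = u ++ y ++ v -> size x = size y ->
   valid_word n y -> word_prod n x = word_prod n y -> reduced w t.
  move=> x y es et sxy vy pxy; subst s t; move: vs ps ms; rewrite valid_cat3 word_prod_cat3 => /and3P[vu vx vv] ps ms.
  split; first by rewrite valid_cat3 vu vy vv.
    by rewrite word_prod_cat3 -pxy.
  by move=> r vr pr; rewrite !size_cat -sxy -!size_cat; apply: ms.
case: H => [[es et]|[es et]].
- move: vs; rewrite es valid_cat3 => /and3P[_ vx _].
  move: vx; rewrite /valid_word /= => /and4P[/andP[i0 _] i1 _ _].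
  apply: (key _ _ es et) => //; first by rewrite /valid_word /=; repeat (apply/andP; split) => //; lia.
  rewrite /word_prod !big_cons !big_nil !mulg1 !mulgA; exact: sadj_braid.
- move: vs; rewrite es valid_cat3 => /and3P[_ vx _].
  move: vx; rewrite /valid_word /= => /and4P[i1 /andP[i0 _] _ _].
  apply: (key _ _ es et) => //; first by rewrite /valid_word /=; repeat (apply/andP; split) => //; lia.
  rewrite /word_prod !big_cons !big_nil !mulg1 !mulgA; symmetry; apply: sadj_braid => //; lia.
Qed.

Lemma comm_move_reduced n (w : 'S_n) s t : reduced w s -> comm_move s t -> reduced w t.
Proof.
case=> vs ps ms [u [v [i [j [ij [es et]]]]]].
move: vs ps ms; rewrite es et valid_cat3 word_prod_cat3 => /and3P[vu vx vv] ps ms.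
move: (vx); rewrite /valid_word /= => /and3P[/andP[i0 i1] /andP[j0 j1] _].
split.
- by move: vu vv; rewrite /valid_word !all_cat /= i0 i1 j0 j1 => -> ->.
- move: ps; rewrite /word_prod !big_cat /= !big_cons => <-; rewrite !mulgA.
  congr (_ * _)%g; rewrite -!mulgA; congr (_ * _)%g.
  case/orP: ij => ij; rewrite big_nil mulg1; [apply/esym|]; exact: sadj_comm.
- by move=> r vr pr; have := ms r vr pr; rewrite !size_cat.
Qed.

Lemma comm_equiv_perm s t : comm_equiv s t -> perm_eq s t.
Proof.
elim=> {s t} [s t [u [v [i [j [_ [-> ->]]]]]]| s | s1 s2 s3 _ h1 _ h2].
- by rewrite perm_cat2l perm_cat2r (perm_catC [:: i] [:: j]).
- exact: perm_refl.
- exact: perm_trans h1 h2.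
Qed.

Lemma braid_move_count s t : braid_move s t -> exists k, count_mem k s != count_mem k t.
Proof.
move=> [u [v [i [[-> ->]|[-> ->]]]]]; exists i; rewrite !count_cat /= eqxx;
  have -> : (i.+1 == i) = false by elim: i.
  all: apply/eqP; lia.
Qed.

Definition o0 : 'I_3 := @Ordinal 3 0 isT.
Definition o1 : 'I_3 := @Ordinal 3 1 isT.
Definition o2 : 'I_3 := @Ordinal 3 2 isT.
Definition gX : 'S_3 := tperm o0 o1.
Definition gY : 'S_3 := tperm o1 o2.

Lemma gXY_braid : (gX * gY * gX = gY * gX * gY)%g.
Proof. by apply: tperm_braid. Qed.

Lemma gXY_ncomm : (gX * gY != gY * gX)%g.
Proof.
apply/eqP => /(congr1 (fun p : 'S_3 => p o0)); rewrite !permM /gX /gY.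
by rewrite (@tpermD _ o1 o2 o0) // !tpermL => /(congr1 val).
Qed.

Definition phi (m : nat) (s : seq nat) : 'S_3 :=
  (\prod_(k <- s) (if k <= m then gX else gY))%g.

Lemma phi_cat3 m u x v : phi m (u ++ x ++ v) = (phi m u * phi m x * phi m v)%g.
Proof. by rewrite /phi !big_cat /= mulgA. Qed.

Lemma braid_mid m i :
  phi m [:: i; i.+1; i] = phi m [:: i.+1; i; i.+1].
Proof.
rewrite /phi !big_cons !big_nil !mulg1 !mulgA.
case: (ltngtP i m) => h //.
exact: gXY_braid.
Qed.

Lemma braid_equiv_phi s t : braid_equiv s t -> forall m, phi m s = phi m t.
Proof.
elim=> {s t} [s t [u [v [i [[-> ->]|[-> ->]]]]]| s | s1 s2 s3 _ h1 _ h2] m.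
- by rewrite !phi_cat3 braid_mid.
- by rewrite !phi_cat3 braid_mid.
- by [].
- by rewrite h1 h2.
Qed.

Lemma comm_move_phi s t : comm_move s t -> exists m, phi m s != phi m t.
Proof.
move=> [u [v [i [j [ij [-> ->]]]]]].
have key : forall a b, a.+1 < b -> phi a [:: a; b] != phi a [:: b; a].
  move=> a b ab; rewrite /phi !big_cons !big_nil !mulg1 leqnn.
  have -> : (b <= a) = false by apply/negbTE; rewrite -ltnNge; apply: ltn_trans ab.
  exact: gXY_ncomm.
case/orP: ij => h; [exists i | exists j]; rewrite !phi_cat3; apply/negP => /eqP E.
- move: (key _ _ h) => /eqP; apply; apply: (mulIg (phi i v)); apply: (mulgI (phi i u)).
  by rewrite !mulgA.
- move: (key _ _ h) => /eqP; apply; apply: (mulIg (phi j v)); apply: (mulgI (phi j u)).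
  by rewrite !mulgA E.
Qed.

Lemma card1_uniq T (A : set T) : A #= `I_1 -> forall x y, A x -> A y -> x = y.
Proof.
move=> /card_set_bijP[f [ff fi _]] x y Ax Ay.
have fx := ff x Ax; have fy := ff y Ay.
apply: fi; rewrite ?inE //; move: fx fy; rewrite /= /mkset; lia.
Qed.

Lemma gen n (w : 'S_n) (mv1 eq2 : seq nat -> seq nat -> Prop) :
  (forall s t, reduced w s -> mv1 s t -> reduced w t) ->
  (forall s, eq2 s s) ->
  (forall s t, mv1 s t -> ~ eq2 s t) ->
  classes_of w eq2 #= `I_1 -> classes_of w (clos_refl_trans _ mv1) #= Rw w.
Proof.
move=> red refl2 neq H.
have U := card1_uniq H.
have nomv : forall s t, Rw w s -> mv1 s t -> False.
  move=> s t Rs m; have Rt : Rw w t by exact: red Rs m.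
  have E : [set t' | Rw w t' /\ eq2 s t'] = [set t' | Rw w t' /\ eq2 t t'].
    by apply: U; [exists s|exists t].
  have : [set t' | Rw w t' /\ eq2 s t'] t by rewrite E; split.
  by move=> [_ /(neq _ _ m)].
have single : forall s t, clos_refl_trans _ mv1 s t -> Rw w s -> s = t.
  move=> s t; elim=> {s t} [s t m Rs|s _|s1 s2 s3 _ h1 _ h2 Rs] //.
    by case: (nomv _ _ Rs m).
  by rewrite -(h1 Rs) in h2 *; apply: h2.
rewrite /classes_of.
have -> : [set [set t | Rw w t /\ clos_refl_trans _ mv1 s t] | s in Rw w] =
          (fun s => [set s]) @` Rw w.
  apply: eq_imagel => s Rs; apply/seteqP; split => t /=.
    by move=> [_ /single ->].
  by move=> ->; split => //; apply: rt_refl.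
apply: inj_card_eq => x y _ _ /(congr1 (fun A => A x)).
by rewrite /= /set1 /mkset => <-.
Qed.
End Aux.
Import Aux.

Theorem lemma4p7 (n : nat) (w : 'S_n) :
  (Cw w #= `I_1 -> Bw w #= Rw w) /\
  (Bw w #= `I_1 -> Cw w #= Rw w).
Proof.
split => H.
- have G := gen (mv1 := braid_move) (eq2 := comm_equiv) (w := w).
  apply: G.
  + exact: braid_move_reduced.
  + by move=> s; apply: rt_refl.
  + move=> s t m /comm_equiv_perm /seq.permP E.
    have [k] := braid_move_count m.
    by rewrite E eqxx.
  + exact: H.
- have G := gen (mv1 := comm_move) (eq2 := braid_equiv) (w := w).
  apply: G.
  + exact: comm_move_reduced.
  + by move=> s; apply: rt_refl.
  + move=> s t m E.
    have [k] := comm_move_phi m.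
    by rewrite (braid_equiv_phi E) eqxx.
  + exact: H.
Qed.
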